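(* Let $R$ be a ring with identity and involution $*$, and let $a\in R$. The following are equivalent: (1) $a$ is core invertible; (2) $a$ is group invertible and there exists $x\in R$ such that $(ax)^*=ax$ and $xa^2=a$; (3) $a$ is group invertible and there exists $x\in R$ such that $(ax)^*=ax$ and $xa=a^{\#}a$.
   Context: An involution on $R$ satisfies $(a^* )^*=a$, $(ab)^*=b^*a^*$, $(a+b)^*=a^*+b^*$. An element $x\in R$ is a core inverse of $a$ if $axa=a$, $xR=aR$ and $Rx=Ra^*$; $a$ is core invertible if such $x$ exists. The group inverse $a^{\#}$ of $a$ is the (unique) $b$ with $aba=a$, $bab=b$, $ab=ba$; $a$ is group invertible if it exists. *)

(* Defs.v *)
From mathcomp Require Import all_boot all_algebra.
Set Implicit Arguments. Unset Strict Implicit. Unset Printing Implicit Defensive.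
Import GRing.Theory.
Local Open Scope ring_scope.

Definition is_involution (R : pzRingType) (star : R -> R) : Prop :=
  [/\ forall a, star (star a) = a,
      forall a b, star (a * b) = star b * star a &
      forall a b, star (a + b) = star a + star b].

Definition right_ideal_eq (R : pzRingType) (x y : R) : Prop :=
  (exists r, x = y * r) /\ (exists s, y = x * s).
Definition left_ideal_eq (R : pzRingType) (x y : R) : Prop :=
  (exists r, x = r * y) /\ (exists s, y = s * x).

Definition is_core_inverse (R : pzRingType) (star : R -> R) (a x : R) : Prop :=
  [/\ a * x * a = a, right_ideal_eq x a & left_ideal_eq x (star a)].

Definition core_invertible (R : pzRingType) (star : R -> R) (a : R) : Prop :=
  exists x, is_core_inverse star a x.

Definition is_group_inverse (R : pzRingType) (a b : R) : Prop :=
  [/\ a * b * a = a, b * a * b = b & a * b = b * a].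

Definition group_invertible (R : pzRingType) (a : R) : Prop :=
  exists b, is_group_inverse a b.

(* Main.v *)
Require Import Defs.
From mathcomp Require Import all_boot all_algebra.
Local Open Scope ring_scope.
Import GRing.Theory.

Lemma one_two (R : pzRingType) (star : R -> R) (a : R) :
  is_involution star -> core_invertible star a ->
  exists b x, is_group_inverse a b /\ star (a * x) = a * x /\ x * (a ^+ 2) = a.
Proof.
case=> sK sM sD [x [axa [[r xr] [s as_]] [[r' xr'] _]]].
have ax2 : a * x * x = x by rewrite {2}xr mulrA axa -xr.
have sa : star a * star x * star a = star a by rewrite -sM -sM mulrA axa.
have xx : x = x * star (a * x).
  rewrite sM.
  transitivity (r' * (star a * star x * star a)); first by rewrite sa.
  by rewrite -!mulrA mulrA -xr'.
have herm : star (a * x) = a * x.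
  have e : a * x = a * x * star (a * x) by rewrite {1}xx mulrA.
  by rewrite {2}e {1}e sM sK.
have xax : x * a * x = x by rewrite -mulrA -herm -xx.
have xa2 : x * a * a = a.
  transitivity (x * a * (x * s)); first by rewrite -as_.
  by rewrite mulrA xax -as_.
exists (x * x * a), x; split; last by split => //; rewrite expr2 mulrA.
have ab : a * (x * x * a) = x * a by rewrite !mulrA ax2.
have ba : x * x * a * a = x * a by rewrite -[x * x * a]mulrA -mulrA xa2.
split.
- by rewrite ab xa2.
- by rewrite ba !mulrA xax.
- by rewrite ab ba.
Qed.

Lemma two_xa (R : pzRingType) (a b x : R) :
  is_group_inverse a b -> x * (a ^+ 2) = a -> x * a = b * a.
Proof.
case=> aba bab ab_ba xa2.
have e : a * a * b = a by rewrite -mulrA ab_ba mulrA aba.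
by rewrite -{1}e !mulrA -(mulrA x a a) -expr2 xa2 ab_ba.
Qed.

Lemma two_one (R : pzRingType) (star : R -> R) (a b x : R) :
  is_involution star -> is_group_inverse a b ->
  star (a * x) = a * x -> x * (a ^+ 2) = a -> core_invertible star a.
Proof.
move=> [sK sM sD] gi herm xa2.
have xa := @two_xa _ a b x gi xa2.
case: gi => aba bab ab_ba.
have axa : a * x * a = a by rewrite -mulrA xa mulrA aba.
have bE : b = a * b * b by rewrite ab_ba bab.
exists (b * a * x); split.
- by rewrite !mulrA aba axa.
- split.
  + exists (b * b * a * x).
    by rewrite {1}bE !mulrA.
  + exists (a * a).
    by rewrite !mulrA -(mulrA (b * a) x a) xa mulrA bab -ab_ba aba.
- split.
  + exists (b * star x).
    by rewrite -[RHS]mulrA -sM herm mulrA.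
  + exists (star a * a).
    have e : star a = star a * (a * x) by rewrite -herm -sM axa.
    rewrite {1}e !mulrA -(mulrA (star a) a b) -(mulrA (star a) (a * b) a) aba.
    by [].
Qed.

Theorem corollary2p7 (R : pzRingType) (star : R -> R) (a : R) :
  is_involution star ->
  (core_invertible star a <->
     (group_invertible a /\
      exists x, star (a * x) = a * x /\ x * (a ^+ 2) = a)) /\
  (core_invertible star a <->
     (exists ag, is_group_inverse a ag /\
      exists x, star (a * x) = a * x /\ x * a = ag * a)).
Proof.
move=> inv; split; split.
- move/(@one_two _ star a inv) => [b [x [gi [h1 h2]]]].
  by split; [exists b | exists x].
- by move=> [[b gi] [x [h1 h2]]]; exact: (@two_one _ star a b x inv gi h1 h2).
- move/(@one_two _ star a inv) => [b [x [gi [h1 h2]]]].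
  exists b; split => //; exists x; split => //; exact: (@two_xa _ a b x gi h2).
- move=> [b [gi [x [h1 h2]]]].
  apply: (@two_one _ star a b x inv gi h1).
  case: gi => aba _ ab_ba.
  by rewrite expr2 mulrA h2 -ab_ba aba.
Qed.
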